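(* Let $\Sigma=(I,X,\mathcal U,\phi,Y,h)$ be a forward complete control system with outputs. Then the following statements are equivalent: (1) $\Sigma$ is IOS; (2) $\Sigma$ is OUAG, OCEP and BORS; (3) $\Sigma$ is OUAG, OULS and BORS; (4) $\Sigma$ is OUAG and OUGS; (5) $\Sigma$ is OCAG and OULS.
   Context: Let $I\in\{\mathbb N_0,\mathbb R_0^+\}$. A forward complete control system with outputs $\Sigma=(I,X,\mathcal U,\phi,Y,h)$ consists of: a normed space $(X,\|\cdot\|_X)$; a vector space $U$ and a normed linear subspace $(\mathcal U,\|\cdot\|_{\mathcal U})$ of $\{u:I\to U\}$ such that for all $u\in\mathcal U$ and $\tau\in I$, $u(\cdot+\tau)\in\mathcal U$ with $\|u(\cdot+\tau)\|_{\mathcal U}\le\|u\|_{\mathcal U}$, and for all $t_2\ge t_1\ge 0$ the function $u|_{[t_1,t_2]}$ (equal to $u$ on $[t_1,t_2]$ and $0$ elsewhere) lies in $\mathcal U$ with $\|u|_{[t_1,t_2]}\|_{\mathcal U}\le\|u\|_{\mathcal U}$; a map $\phi:I\times X\times\mathcal U\to X$ with $\phi(0,x,u)=x$, causality (if $u,\tilde u\in\mathcal U$ agree on $[0,t]$ then $\phi(t,x,u)=\phi(t,x,\tilde u)$), and cocycle property $\phi(t+s,x,u)=\phi(s,\phi(t,x,u),u(t+\cdot))$ for all $t,s\in I$; a normed space $(Y,\|\cdot\|_Y)$ and a map $h:X\times U\to Y$. Write $y(t,x,u)=h(\phi(t,x,u),u(t))$. $B_r=\{x\in X:\|x\|_X<r\}$,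 $B_{r,\mathcal U}=\{u\in\mathcal U:\|u\|_{\mathcal U}<r\}$. $\mathcal K$: continuous strictly increasing $\gamma:\mathbb R_0^+\to\mathbb R_0^+$ with $\gamma(0)=0$; $\mathcal K_\infty$: unbounded $\mathcal K$-functions; $\mathcal L$: continuous decreasing functions tending to $0$; $\mathcal{KL}$: $\beta$ with $\beta(\cdot,t)\in\mathcal K$ for all $t$ and $\beta(r,\cdot)\in\mathcal L$ for all $r>0$. All statements below quantify over $x\in X$, $u\in\mathcal U$, $t\in I$. IOS: $\exists\beta\in\mathcal{KL},\gamma\in\mathcal K_\infty$ with $\|y(t,x,u)\|_Y\le\beta(\|x\|_X,t)+\gamma(\|u\|_{\mathcal U})$ for all $x,u,t$. OCEP: for every $\tau\in I$ and $\varepsilon>0$ there is $\delta>0$ such that $t\le\tau$, $\|x\|_X\le\delta$, $\|u\|_{\mathcal U}\le\delta$ imply $\|y(t,x,u)\|_Y\le\varepsilon$. BORS: for all $C>0$, $\tau\in I$: $\sup\{\|y(t,x,u)\|_Y:\|x\|_X<C,\|u\|_{\mathcal U}<C,t<\tau\}<\infty$. OULS: $\exists r>0,\sigma,\gamma\in\mathcal K_\infty$ such that $\|y(t,x,u)\|_Y\le\sigma(\|x\|_X)+\gamma(\|u\|_{\mathcal U})$ for all $x\in B_r,u\in B_{r,\mathcal U},t\in I$. OUGS: $\exists\sigma,\gamma\in\mathcal K_\infty$ with the same inequality for all $x\in X,u\in\mathcal U,t\in I$. OUAG: $\exists\gamma\in\mathcal K_\infty$ such that for all $\varepsilon,r,s>0$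 there is $\tau\in I$ with $\|y(t,x,u)\|_Y\le\varepsilon+\gamma(\|u\|_{\mathcal U})$ for all $x\in B_r$, $u\in B_{s,\mathcal U}$, $t\ge\tau$. OCAG: $\exists\beta\in\mathcal{KL},\gamma\in\mathcal K_\infty,c\ge0$ with $\|y(t,x,u)\|_Y\le\beta(\|x\|_X+c,t)+\gamma(\|u\|_{\mathcal U})$ for all $x,u,t$. *)

(* Defs.v *)
From HB Require Import structures.
From mathcomp Require Import all_boot all_order all_algebra.
From mathcomp Require Import all_classical all_reals all_analysis.
Set Implicit Arguments. Unset Strict Implicit. Unset Printing Implicit Defensive.
Import Order.TTheory GRing.Theory Num.Theory.
Import numFieldNormedType.Exports.
Local Open Scope classical_set_scope.
Local Open Scope ring_scope.

Inductive timedom := TDiscrete | TContinuous.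

Definition inI (R : realType) (I : timedom) (t : R) : Prop :=
  0 <= t /\ (I = TDiscrete -> exists n : nat, t = n%:R).

Definition time (R : realType) (I : timedom) := {t : R | inI I t}.

Lemma inI0 (R : realType) (I : timedom) : inI I (0 : R).
Proof. by split=> // _; exists 0%N. Qed.

Lemma inI_add (R : realType) (I : timedom) (a b : R) :
  inI I a -> inI I b -> inI I (a + b).
Proof.
move=> [a0 Ha] [b0 Hb]; split; first exact: addr_ge0.
move=> HI; have [n ->] := Ha HI; have [m ->] := Hb HI.
by exists (n + m)%N; rewrite natrD.
Qed.

Definition t0 (R : realType) (I : timedom) : time R I := exist _ 0 (inI0 R I).

Definition tadd (R : realType) (I : timedom) (t s : time R I) : time R I :=
  exist _ (proj1_sig t + proj1_sig s) (inI_add (proj2_sig t) (proj2_sig s)).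

Definition shift (R : realType) (I : timedom) (U : Type) (u : time R I -> U)
  (tau : time R I) : time R I -> U := fun s => u (tadd s tau).

Definition restr (R : realType) (I : timedom) (U : lmodType R)
  (u : time R I -> U) (t1 t2 : R) : time R I -> U :=
  fun s => if (t1 <= proj1_sig s) && (proj1_sig s <= t2) then u s else 0.

Record ControlSystem (R : realType) (I : timedom) (X : normedModType R)
    (U : lmodType R) (Y : normedModType R) := {
  Uin : set (time R I -> U);
  Unorm : (time R I -> U) -> R;
  Uin0 : Uin (fun _ => 0);
  UinD : forall u v, Uin u -> Uin v -> Uin (fun t => u t + v t);
  UinZ : forall (a : R) u, Uin u -> Uin (fun t => a *: u t);
  Unorm_ge0 : forall u, Uin u -> 0 <= Unorm u;
  Unorm_eq0 : forall u, Uin u -> Unorm u = 0 -> u = (fun _ => 0);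
  Unorm0 : Unorm (fun _ => 0) = 0;
  UnormZ : forall (a : R) u, Uin u -> Unorm (fun t => a *: u t) = `|a| * Unorm u;
  UnormD : forall u v, Uin u -> Uin v ->
    Unorm (fun t => u t + v t) <= Unorm u + Unorm v;
  Uin_shift : forall u tau, Uin u -> Uin (shift u tau);
  Unorm_shift : forall u tau, Uin u -> Unorm (shift u tau) <= Unorm u;
  Uin_restr : forall u (t1 t2 : R), 0 <= t1 -> t1 <= t2 -> Uin u -> Uin (restr u t1 t2);
  Unorm_restr : forall u (t1 t2 : R), 0 <= t1 -> t1 <= t2 -> Uin u ->
    Unorm (restr u t1 t2) <= Unorm u;
  phi : time R I -> X -> (time R I -> U) -> X;
  phi_t0 : forall x u, Uin u -> phi (t0 R I) x u = x;
  phi_causal : forall t x u v, Uin u -> Uin v ->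
    (forall s : time R I, proj1_sig s <= proj1_sig t -> u s = v s) ->
    phi t x u = phi t x v;
  phi_cocycle : forall t s x u, Uin u ->
    phi (tadd t s) x u = phi s (phi t x u) (shift u t);
  h : X -> U -> Y }.

Arguments ControlSystem : clear implicits.
Arguments Uin {R I X U Y}.
Arguments Unorm {R I X U Y}.
Arguments phi {R I X U Y}.
Arguments h {R I X U Y}.

Definition yout R I X U Y (S : ControlSystem R I X U Y) (t : time R I) (x : X)
  (u : time R I -> U) : Y := h S (phi S t x u) (u t).

Definition classK (R : realType) (g : R -> R) : Prop :=
  {within [set r : R | 0 <= r], continuous g} /\
  (forall r, 0 <= r -> 0 <= g r) /\
  (forall a b, 0 <= a -> a < b -> g a < g b) /\
  g 0 = 0.

Definition classKinf (R : realType) (g : R -> R) : Prop :=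
  classK g /\ (forall M : R, exists r, 0 <= r /\ M < g r).

Definition classL (R : realType) (g : R -> R) : Prop :=
  {within [set r : R | 0 <= r], continuous g} /\
  (forall r, 0 <= r -> 0 <= g r) /\
  (forall a b, 0 <= a -> a < b -> g b < g a) /\
  (g r @[r --> +oo] --> 0).

Definition classKL (R : realType) (b : R -> R -> R) : Prop :=
  (forall t, 0 <= t -> classK (fun r => b r t)) /\
  (forall r, 0 < r -> classL (b r)).

Section Props.
Variables (R : realType) (I : timedom) (X : normedModType R) (U : lmodType R)
  (Y : normedModType R) (S : ControlSystem R I X U Y).
Local Notation y := (yout S).
Local Notation tv := (@proj1_sig R (inI I)).

Definition IOS : Prop :=
  exists beta gamma, classKL beta /\ classKinf gamma /\
  forall x u (t : time R I), Uin S u ->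
    `|y t x u| <= beta `|x| (tv t) + gamma (Unorm S u).

Definition OCEP : Prop :=
  forall (tau : time R I) (eps : R), 0 < eps -> exists delta : R, 0 < delta /\
  forall x u (t : time R I), Uin S u -> tv t <= tv tau -> `|x| <= delta ->
    Unorm S u <= delta -> `|y t x u| <= eps.

Definition BORS : Prop :=
  forall (C : R) (tau : time R I), 0 < C -> exists M : R,
  forall x u (t : time R I), Uin S u -> `|x| < C -> Unorm S u < C ->
    tv t < tv tau -> `|y t x u| <= M.

Definition OULS : Prop :=
  exists (r : R) sigma gamma, 0 < r /\ classKinf sigma /\ classKinf gamma /\
  forall x u (t : time R I), Uin S u -> `|x| < r -> Unorm S u < r ->
    `|y t x u| <= sigma `|x| + gamma (Unorm S u).

Definition OUGS : Prop :=
  exists sigma gamma, classKinf sigma /\ classKinf gamma /\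
  forall x u (t : time R I), Uin S u ->
    `|y t x u| <= sigma `|x| + gamma (Unorm S u).

Definition OUAG : Prop :=
  exists gamma, classKinf gamma /\
  forall eps r s : R, 0 < eps -> 0 < r -> 0 < s -> exists tau : time R I,
  forall x u (t : time R I), Uin S u -> `|x| < r -> Unorm S u < s ->
    tv tau <= tv t -> `|y t x u| <= eps + gamma (Unorm S u).

Definition OCAG : Prop :=
  exists beta gamma (c : R), classKL beta /\ classKinf gamma /\ 0 <= c /\
  forall x u (t : time R I), Uin S u ->
    `|y t x u| <= beta (`|x| + c) (tv t) + gamma (Unorm S u).
End Props.

(* Main.v *)
Require Import Defs.
From HB Require Import structures.
From mathcomp Require Import all_boot all_order all_algebra.
From mathcomp Require Import all_classical all_reals all_analysis.
From mathcomp Require Import lra.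
Set Implicit Arguments. Unset Strict Implicit. Unset Printing Implicit Defensive.
Import Order.TTheory GRing.Theory Num.Theory.
Import numFieldNormedType.Exports.
Local Open Scope classical_set_scope.
Local Open Scope ring_scope.


Section PL.
Variable R : realType.

Definition clamp (x : R) : R := Order.min (Order.max x 0) 1.

Lemma clamp0 x : x <= 0 -> clamp x = 0.
Proof. by move=> h; rewrite /clamp (max_r h) min_l ?ler01. Qed.
Lemma clamp1 x : 1 <= x -> clamp x = 1.
Proof. move=> h; rewrite /clamp min_r // le_max h //. Qed.
Lemma clamp_ge0 x : 0 <= clamp x.
Proof. by rewrite /clamp le_min le_max lexx orbT ler01. Qed.
Lemma clamp_le1 x : clamp x <= 1.
Proof. by rewrite /clamp ge_min lexx orbT. Qed.
Lemma clamp_mono x y : x <= y -> clamp x <= clamp y.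
Proof.
move=> h; rewrite /clamp le_min !ge_min lexx orbT andbT le_max !ge_max.
have [y0|y0] := leP 0 y; first by rewrite h.
by rewrite (le_trans h (ltW y0)) lexx /= orbT.
Qed.

Lemma clamp_cont : continuous clamp.
Proof.
move=> x; rewrite /clamp.
apply: (@continuous_min R R (fun x => Order.max x 0) (fun=> 1) x); last exact: cvg_cst.
apply: (@continuous_max R R (fun x => x) (fun=> 0) x); last exact: cvg_cst.
exact: cvg_id.
Qed.

Lemma sum_cont (f : nat -> R -> R) N :
  (forall n, continuous (f n)) -> continuous (fun s => \sum_(0 <= n < N) f n s).
Proof.
move=> fc; elim: N => [|N IH] x.
  under eq_fun do rewrite big_geq //. exact: cvg_cst.
under eq_fun do rewrite big_nat_recr //=.
apply: cvgD; [exact: IH|exact: fc].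
Qed.

Definition PLt (a : nat -> R) (s : R) (n : nat) := a n * clamp (s - n%:R + 1).
Definition PL (a : nat -> R) (s : R) : R :=
  \sum_(0 <= n < (Num.truncn s).+2) PLt a s n.

Lemma PL_ext a s M1 M2 : s + 1 <= M1%:R -> (M1 <= M2)%N ->
  \sum_(0 <= n < M2) PLt a s n = \sum_(0 <= n < M1) PLt a s n.
Proof.
move=> h12 hM; rewrite (@big_cat_nat _ _ _ M1) //=.
rewrite [X in _ + X]big1_seq ?addr0 // => n /andP[_]; rewrite mem_index_iota => /andP[Hn _].
rewrite /PLt clamp0 ?mulr0 //.
have : M1%:R <= n%:R :> R by rewrite ler_nat.
lra.
Qed.

Lemma trunc2 (s : R) : s + 1 <= ((Num.truncn s).+2)%:R.
Proof.
have := truncnS_gt s; rewrite -!natr1; lra.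
Qed.

Lemma PL_eq a s N : s + 1 <= N%:R ->
  PL a s = \sum_(0 <= n < N) PLt a s n.
Proof.
move=> hN; rewrite /PL.
have [h|h] := leqP N (Num.truncn s).+2.
  by rewrite (PL_ext _ hN h).
by rewrite (PL_ext _ (trunc2 s) (ltnW h)).
Qed.

Lemma PL_cont a : continuous (PL a).
Proof.
move=> x.
set N := (Num.truncn x).+3.
have Qc := @sum_cont (fun n s => PLt a s n) N.
have H : \forall s \near x, (fun s => \sum_(0 <= n < N) PLt a s n) s = PL a s.
  apply/nbhs_normP; exists 1 => //= s hs.
  rewrite (@PL_eq a s N) //.
  have := trunc2 x; rewrite /N -(natr1 (Num.truncn x).+2).
  have : s - x < 1 by move: hs; rewrite /ball_ /= ltr_norml; lra.
  lra.
apply: cvg_trans (near_eq_cvg H) _.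
rewrite (@PL_eq a x N); last first.
  have := trunc2 x; rewrite /N -(natr1 (Num.truncn x).+2); lra.
apply: Qc => n y; apply: cvgM; first exact: cvg_cst.
apply: (@continuous_comp _ _ _ (fun s : R => s - n%:R + 1) clamp y); last exact: clamp_cont.
apply: cvgD; last exact: cvg_cst.
apply: cvgB; [exact: cvg_id| exact: cvg_cst].
Qed.
End PL.


Section L1.
Variable R : realType.

Lemma sum_ge_term (f : nat -> R) k N : (forall n, 0 <= f n) -> (k < N)%N ->
  f k <= \sum_(0 <= n < N) f n.
Proof.
move=> f0 kN; rewrite (@big_cat_nat _ _ _ k) //=; last exact: ltnW.
rewrite [X in _ + X]big_ltn //= addrCA lerDl addr_ge0 //; apply: sumr_ge0 => *; exact: f0.
Qed.

Lemma PL_ge0 (a : nat -> R) s : (forall n, 0 <= a n) -> 0 <= PL a s.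
Proof. by move=> a0; apply: sumr_ge0 => n _; rewrite /PLt mulr_ge0 ?clamp_ge0. Qed.

Lemma PL_mono (a : nat -> R) s s' : (forall n, 0 <= a n) -> s <= s' -> PL a s <= PL a s'.
Proof.
move=> a0 ss; rewrite (@PL_eq _ a s (Num.truncn s').+2); last first.
  by apply: le_trans (trunc2 s'); rewrite lerD2r.
rewrite /PL; apply: ler_sum => n _; rewrite /PLt ler_wpM2l //.
by apply: clamp_mono; rewrite lerD2r lerD2r.
Qed.

Lemma telesc (v : nat -> R) k : \sum_(0 <= n < k) (v n - v n.+1) = v 0%N - v k.
Proof.
elim: k => [|k IH]; first by rewrite big_geq // subrr.
by rewrite big_nat_recr //= IH; lra.
Qed.

Variable b : R -> R.
Hypothesis hb0 : forall r, 0 <= b r.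
Hypothesis hmono : forall r s, 0 <= r -> r <= s -> b r <= b s.
Hypothesis hlim : forall e, 0 < e -> exists d, 0 < d /\ forall r, 0 <= r -> r <= d -> b r <= e.

Lemma b0 : b 0 <= 0.
Proof.
have [h|//] := ltP 0 (b 0).
have h2 : 0 < b 0 / 2 by lra.
have [d [d0 H]] := hlim h2.
have := H 0 (lexx _) (ltW d0); lra.
Qed.

Let F := PL (fun n => b (n.+1%:R)).
Let v (n : nat) := b (n.+1%:R)^-1.
Let w (n : nat) := v n - v n.+1.
Let D (s : R) := v 0%N - PL w (s - 2).
Let Nm (r : R) := if 0 < r then D (r^-1 - 1) else 0.
Definition sgm (r : R) := Nm r + Order.min r 1 * F r + r.

Lemma v_ge0 n : 0 <= v n. Proof. exact: hb0. Qed.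
Lemma w_ge0 n : 0 <= w n.
Proof.
rewrite /w subr_ge0 /v; apply: hmono; first by rewrite invr_ge0.
by rewrite lef_pV2 ?posrE // ler_nat.
Qed.

Lemma F_ge0 s : 0 <= F s. Proof. by apply: PL_ge0 => n; exact: hb0. Qed.
Lemma F_mono s s' : s <= s' -> F s <= F s'. Proof. by apply: PL_mono => n; exact: hb0. Qed.
Lemma F_ge r : 0 <= r -> b r <= F r.
Proof.
move=> r0; set k := Num.truncn r.
have h1 : r < k.+1%:R by exact: truncnS_gt.
have h2 : k%:R <= r by rewrite truncn_le.
apply: (le_trans (hmono r0 (ltW h1))).
rewrite /F /PL.
have -> : b k.+1%:R = PLt (fun n => b n.+1%:R) r k by rewrite /PLt clamp1 ?mulr1 //; lra.
apply: (@sum_ge_term (fun n => PLt (fun n => b n.+1%:R) r n) k (Num.truncn r).+2).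
  by move=> n; rewrite /PLt mulr_ge0 ?clamp_ge0.
by rewrite /k ltnS leqnSn.
Qed.

Lemma D_ge s k : s <= k.+1%:R -> v k <= D s.
Proof.
move=> sk; rewrite /D (@PL_eq _ w (s - 2) k); last first.
  by move: sk; rewrite -natr1; lra.
have : \sum_(0 <= n < k) PLt w (s - 2) n <= \sum_(0 <= n < k) w n.
  by apply: ler_sum => n _; rewrite /PLt ler_piMr ?clamp_le1 ?w_ge0.
rewrite telesc; lra.
Qed.

Lemma D_le s k : k.+1%:R <= s -> D s <= v k.
Proof.
move=> ks.
rewrite /D (@PL_eq _ w (s - 2) (k + (Num.truncn s).+2)); last first.
  by have := trunc2 s; rewrite natrD; have : (0:R) <= k%:R by []; lra.
have : \sum_(0 <= n < k) w n <= \sum_(0 <= n < k + (Num.truncn s).+2) PLt w (s - 2) n.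
  rewrite [X in _ <= X](@big_cat_nat _ _ _ k) //= ?leq_addr //.
  rewrite -[X in X <= _]addr0; apply: lerD.
    apply: ler_sum_nat => n /andP[_ nk]; rewrite /PLt clamp1 ?mulr1 //.
    have : n.+1%:R <= k%:R :> R by rewrite ler_nat.
    by move: ks; rewrite -!natr1; lra.
  by apply: sumr_ge0 => n _; rewrite /PLt mulr_ge0 ?w_ge0 ?clamp_ge0.
by rewrite telesc; lra.
Qed.

Lemma D_ge0 s : 0 <= D s.
Proof.
rewrite /D /PL; set N := (Num.truncn (s - 2)).+2.
have : \sum_(0 <= n < N) PLt w (s - 2) n <= \sum_(0 <= n < N) w n.
  by apply: ler_sum => n _; rewrite /PLt ler_piMr ?clamp_le1 ?w_ge0.
by rewrite telesc; have := v_ge0 N; lra.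
Qed.

Lemma D_anti s s' : s <= s' -> D s' <= D s.
Proof.
move=> ss; rewrite /D lerD2l lerN2; apply: PL_mono; first exact: w_ge0.
by rewrite lerD2r.
Qed.

Lemma Nm_ge0 r : 0 <= Nm r.
Proof. by rewrite /Nm; case: ifP => // _; exact: D_ge0. Qed.

Lemma Nm_mono r s : 0 <= r -> r <= s -> Nm r <= Nm s.
Proof.
move=> r0 rs; rewrite /Nm; case: ifP => h; last exact: Nm_ge0.
have s0 : 0 < s by apply: lt_le_trans rs.
rewrite s0; apply: D_anti; rewrite lerD2r lef_pV2 ?posrE //.
Qed.

Lemma Nm_ge r : 0 < r -> r <= 1 -> b r <= Nm r.
Proof.
move=> r0 r1; rewrite /Nm r0; set s := r^-1 - 1.
have s0 : 0 <= s by rewrite /s subr_ge0 invf_ge1.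
set k := Num.truncn s.
have h1 : s < k.+1%:R by exact: truncnS_gt.
have h2 : k%:R <= s by rewrite truncn_le.
apply: le_trans (D_ge (ltW h1)); rewrite /v; apply: hmono; first exact: ltW.
rewrite -[r]invrK lef_pV2 ?posrE ?invr_gt0 // -natr1; move: h2; rewrite /s; lra.
Qed.

Lemma D_cont : continuous D.
Proof.
move=> x; apply: cvgB; first exact: cvg_cst.
apply: (@continuous_comp _ _ _ (fun s : R => s - 2) (PL w) x); last exact: PL_cont.
apply: cvgB; [exact: cvg_id|exact: cvg_cst].
Qed.

Lemma Nm_cont : continuous Nm.
Proof.
move=> x; have [x0|x0|->] := ltgtP x 0.
- have H : \forall s \near x, (fun=> (0:R)) s = Nm s.
    apply/nbhs_normP; exists (- x); first by rewrite /= oppr_gt0.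
    move=> s; rewrite /ball_ /= ltr_norml => /andP[h1 h2].
    by rewrite /Nm ifF //; apply/negbTE; rewrite -leNgt; lra.
  apply: cvg_trans (near_eq_cvg H) _.
  by rewrite /Nm ifF; [exact: cvg_cst|apply/negbTE; rewrite -leNgt ltW].
- have H : \forall s \near x, (fun s => D (s^-1 - 1)) s = Nm s.
    apply/nbhs_normP; exists x => //.
    move=> s; rewrite /ball_ /= ltr_norml => /andP[h1 h2].
    by rewrite /Nm ifT //; lra.
  apply: cvg_trans (near_eq_cvg H) _.
  rewrite /Nm x0.
  apply: (@continuous_comp _ _ _ (fun s : R => s^-1 - 1) D x); last exact: D_cont.
  apply: cvgB; last exact: cvg_cst.
  by apply: inv_continuous; rewrite gt_eqF.
- apply/cvgrPdist_le => e e0.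
  have [d [d0 Hd]] := hlim e0.
  set k := Num.truncn d^-1.
  have hk : d^-1 < k.+1%:R by exact: truncnS_gt.
  have vk : v k <= e.
    rewrite /v; apply: Hd; first by rewrite invr_ge0.
    rewrite -[d]invrK lef_pV2 ?posrE ?invr_gt0 //; exact: ltW.
  apply/nbhs_normP; exists (k.+2%:R)^-1; first by rewrite /= invr_gt0.
  move=> t; rewrite /ball_ /= sub0r normrN => ht.
  rewrite /Nm ltxx sub0r normrN.
  case: ifP => t0; last by rewrite normr0 ltW.
  rewrite ger0_norm ?D_ge0 //; apply: le_trans vk; apply: D_le.
  have : k.+2%:R < t^-1.
    by rewrite -[k.+2%:R]invrK ltf_pV2 ?posrE ?invr_gt0 // -(gtr0_norm t0).
  rewrite -(natr1 k.+1); lra.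
Qed.

Lemma sgm_cont : continuous sgm.
Proof.
move=> x; apply: cvgD; last exact: cvg_id.
apply: cvgD; first exact: Nm_cont.
apply: cvgM; last exact: PL_cont.
apply: (@continuous_min R R (fun x => x) (fun=> 1) x); [exact: cvg_id|exact: cvg_cst].
Qed.

Lemma sgm0 : sgm 0 = 0.
Proof. by rewrite /sgm /Nm ltxx min_l ?ler01 // mul0r !addr0. Qed.

Lemma sgm_lt r s : 0 <= r -> r < s -> sgm r < sgm s.
Proof.
move=> r0 rs; rewrite /sgm; apply: ler_ltD => //; apply: lerD.
  exact: Nm_mono (ltW rs).
apply: ler_pM.
- by rewrite le_min r0 ler01.
- exact: F_ge0.
- by rewrite le_min !ge_min lexx (ltW rs) /= orbT.
- exact: F_mono (ltW rs).
Qed.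

Lemma sgm_ge r : 0 <= r -> b r <= sgm r.
Proof.
move=> r0; rewrite /sgm.
have h1 := Nm_ge0 r; have h3 := F_ge0 r.
have [r1|r1] := leP r 1.
  have h2 : 0 <= r * F r by rewrite mulr_ge0.
  have [r00|rp] := eqVneq r 0; first by subst r; have := b0; lra.
  have rp' : 0 < r by rewrite lt_def rp r0.
  have := Nm_ge rp' r1; lra.
rewrite mul1r; have := F_ge r0; lra.
Qed.

End L1.

Lemma L1b (R : realType) (b : R -> R) :
  (forall r, 0 <= b r) -> (forall r s, 0 <= r -> r <= s -> b r <= b s) ->
  (forall e, 0 < e -> exists d, 0 < d /\ forall r, 0 <= r -> r <= d -> b r <= e) ->
  exists sg : R -> R, continuous sg /\ classKinf sg /\ forall r, 0 <= r -> b r <= sg r.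
Proof.
move=> hb0 hmono hlim; exists (sgm b); split; first exact: sgm_cont.
split; last exact: sgm_ge.
split.
  split; first exact/continuous_subspaceT/sgm_cont.
  split; first by move=> r r0; rewrite -(sgm0 b); case: (eqVneq r 0) => [->//|h]; apply/ltW/sgm_lt; rewrite // lt_def h r0.
  split; first by move=> a c a0 ac; exact: sgm_lt.
  exact: sgm0.
move=> M; exists (`|M| + 1); split; first by rewrite addr_ge0.
apply: lt_le_trans (_ : `|M| + 1 <= _).
  by have := ler_norm M; lra.
rewrite /sgm -[X in X <= _]add0r; apply: lerD => //.
by rewrite addr_ge0 ?Nm_ge0 // mulr_ge0 ?F_ge0 // le_min ler01 addr_ge0.
Qed.


Lemma L1rel (R : realType) (Z : R -> R -> Prop) :
  (forall e, 0 < e -> exists d, 0 < d /\ forall r v, 0 <= r -> r <= d -> Z r v -> v <= e) ->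
  (forall C, exists M, forall r v, 0 <= r -> r <= C -> Z r v -> v <= M) ->
  exists sg : R -> R, continuous sg /\ classKinf sg /\ forall r v, 0 <= r -> Z r v -> v <= sg r.
Proof.
move=> H0 HB.
pose E r := [set v : R | v = 0 \/ exists r', [/\ 0 <= r', r' <= r & Z r' v]].
have hs r : has_sup (E r).
  split; first by exists 0; left.
  have [M HM] := HB r; exists (Num.max M 0) => v [->|[r' [r0 rr zr]]].
    by rewrite le_max lexx orbT.
  by rewrite le_max (HM r' v r0 rr zr).
pose b r := sup (E r).
have hb0 r : 0 <= b r by apply: sup_upper_bound (hs r) _ _; left.
have hmono r s : 0 <= r -> r <= s -> b r <= b s.
  move=> r0 rs; apply: ge_sup; first by exists 0; left.
  move=> v [->|[r' [r'0 rr zr]]]; first exact: hb0.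
  apply: sup_upper_bound (hs s) _ _; right; exists r'; split => //; exact: le_trans rs.
have hlim e : 0 < e -> exists d, 0 < d /\ forall r, 0 <= r -> r <= d -> b r <= e.
  move=> e0; have [d [d0 Hd]] := H0 e e0; exists d; split => // r r0 rd.
  apply: ge_sup; first by exists 0; left.
  move=> v [->|[r' [r'0 rr zr]]]; first exact: ltW.
  exact: (Hd r' v r'0 (le_trans rr rd) zr).
have [sg [sc [sk sge]]] := L1b hb0 hmono hlim.
exists sg; split => //; split => // r v r0 zr.
apply: le_trans (sge r r0); apply: sup_upper_bound (hs r) _ _; right; exists r; split => //.
Qed.


Lemma within_eps (R : realType) (g : R -> R) (x : R) :
  {within [set r : R | 0 <= r], continuous g} -> 0 <= x ->
  forall e : R, 0 < e -> exists d : R, 0 < d /\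
   forall r, 0 <= r -> `|x - r| < d -> `|g x - g r| < e.
Proof.
move=> /subspace_continuousP cg x0 e e0.
have /cvgrPdist_lt/(_ e e0) := cg x x0.
rewrite near_withinE => /nbhs_normP [d /= d0 H].
exists d; split => // r r0 xr; apply: H => //=.
Qed.

Lemma pinfty_eps (R : realType) (g : R -> R) :
  g r @[r --> +oo] --> 0 ->
  forall e : R, 0 < e -> exists T : R, forall t, T <= t -> `|g t| < e.
Proof.
move=> /cvgrPdist_lt H e e0; have [T [_ HT]] := H e e0.
exists (T + 1) => t Tt; rewrite -normrN -(sub0r (g t)); apply: HT.
by apply: (lt_le_trans _ Tt); rewrite ltrDl.
Qed.

Lemma eps_pinfty (R : realType) (g : R -> R) :
  (forall e : R, 0 < e -> exists T : R, forall t, T <= t -> `|g t| <= e) ->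
  g r @[r --> +oo] --> 0.
Proof.
move=> H; apply/cvgrPdist_le => e e0; have [T HT] := H e e0.
exists T; split => //= t Tt; rewrite sub0r normrN; apply: HT; exact: ltW.
Qed.

Section Cmp.
Variable R : realType.

Lemma K_ge0 (g : R -> R) r : classK g -> 0 <= r -> 0 <= g r.
Proof. by move=> [_ [h _]]; apply: h. Qed.

Lemma K_mono (g : R -> R) a b : classK g -> 0 <= a -> a <= b -> g a <= g b.
Proof.
move=> [_ [_ [h _]]] a0; rewrite le_eqVlt => /orP[/eqP->//|ab].
exact/ltW/h.
Qed.

Lemma K_eps (g : R -> R) : classK g ->
  forall e, 0 < e -> exists d, 0 < d /\ forall r, 0 <= r -> r <= d -> g r <= e.
Proof.
move=> [gc [_ [_ g0]]] e e0.
have [d [d0 H]] := within_eps gc (lexx 0) e0.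
exists (d / 2); split; first by lra.
move=> r r0 rd; have := H r r0.
rewrite g0 sub0r !normrN ger0_norm // => /(_ ltac:(lra)) h.
rewrite sub0r normrN in h; have := ler_norm (g r); lra.
Qed.

Lemma L_anti (g : R -> R) a b : classL g -> 0 <= a -> a <= b -> g b <= g a.
Proof.
move=> [_ [_ [h _]]] a0; rewrite le_eqVlt => /orP[/eqP->//|ab].
exact/ltW/h.
Qed.

Lemma L_eps (g : R -> R) : classL g ->
  forall e, 0 < e -> exists T, forall t, T <= t -> g t <= e.
Proof.
move=> [_ [_ [_ gl]]] e e0; have [T HT] := pinfty_eps gl e0.
by exists T => t Tt; apply: ltW; apply: le_lt_trans (HT t Tt); exact: ler_norm.
Qed.

Lemma KL_K (b : R -> R -> R) t : classKL b -> 0 <= t -> classK (b^~ t).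
Proof. by move=> [h _]; apply: h. Qed.

Lemma KL_0 (b : R -> R -> R) r t : classKL b -> 0 <= r -> 0 <= t -> b r t <= b r 0.
Proof.
move=> hb r0 t0; have [->|rp] := eqVneq r 0.
  by have [_ [_ [_ ->]]] := KL_K hb t0; apply: K_ge0 (KL_K hb (lexx 0)) (lexx 0).
have [_ hL] := hb; apply: L_anti (hL r _) (lexx 0) t0; by rewrite lt_def rp r0.
Qed.

Lemma KL_mono (b : R -> R -> R) r s t : classKL b -> 0 <= t -> 0 <= r -> r <= s -> b r t <= b s t.
Proof. by move=> hb t0; apply: K_mono (KL_K hb t0). Qed.

Lemma KL_anti (b : R -> R -> R) r t s : classKL b -> 0 <= r -> 0 <= t -> t <= s -> b r s <= b r t.
Proof.
move=> hb r0 t0 ts; have [->|rp] := eqVneq r 0.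
  have [_ [_ [_ ->]]] := KL_K hb (le_trans t0 ts).
  by have [_ [_ [_ ->]]] := KL_K hb t0.
have [_ hL] := hb; apply: L_anti (hL r _) t0 ts; by rewrite lt_def rp r0.
Qed.

Lemma KL_eps (b : R -> R -> R) r : classKL b -> 0 < r ->
  forall e, 0 < e -> exists T, forall t, T <= t -> b r t <= e.
Proof. by move=> [_ hL] r0; apply: L_eps (hL r r0). Qed.

Lemma two_pow (n : nat) : n.+1%:R <= (2 : R) ^+ n.
Proof.
have : (n < 2 ^ n)%N by apply: ltn_expl.
by rewrite -(ler_nat R) natrX.
Qed.

End Cmp.

Lemma time_ge (R : realType) (I : timedom) (T : R) :
  exists tau : time R I, T <= proj1_sig tau.
Proof.
set n := (Num.truncn T).+1.
have h : inI I (n%:R : R) by split => // _; exists n.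
exists (exist _ _ h) => /=.
by apply: ltW; apply: (lt_le_trans (truncnS_gt T)).
Qed.

Lemma time_ge0 (R : realType) (I : timedom) (t : time R I) : 0 <= proj1_sig t.
Proof. exact: (proj1 (proj2_sig t)). Qed.


Section L2.
Variable R : realType.

Lemma inv1_cont : continuous (fun t : R => (`|t| + 1)^-1).
Proof.
move=> x.
apply: (@continuous_comp _ _ _ (fun t : R => `|t| + 1) GRing.inv x).
  apply: cvgD; last exact: cvg_cst.
  by apply: cvg_norm; exact: cvg_id.
by apply: inv_continuous; rewrite gt_eqF // ltr_wpDl.
Qed.

Lemma inv1_pos (t : R) : 0 < (`|t| + 1)^-1.
Proof. by rewrite invr_gt0 ltr_wpDl. Qed.

Lemma inv1_anti (a b : R) : 0 <= a -> a <= b -> (`|b| + 1)^-1 <= (`|a| + 1)^-1.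
Proof.
move=> a0 ab; rewrite lef_pV2 ?posrE ?ltr_wpDl // lerD2r !ger0_norm //.
exact: le_trans ab.
Qed.

Variable W : R -> R -> R -> Prop.
Hypothesis Wa : forall e, 0 < e -> exists d, 0 < d /\
  forall r t v, 0 <= r -> r <= d -> 0 <= t -> W r t v -> v <= e.
Hypothesis Wa' : forall C, exists M, forall r t v, 0 <= r -> r <= C -> 0 <= t -> W r t v -> v <= M.
Hypothesis Wb : forall r e, 0 < e -> exists T, forall r' t v,
  0 <= r' -> r' <= r -> 0 <= t -> T <= t -> W r' t v -> v <= e.

Lemma L2 : exists beta : R -> R -> R, classKL beta /\
  forall r t v, 0 <= r -> 0 <= t -> W r t v -> v <= beta r t.
Proof.
pose Z1 r v := exists t, 0 <= t /\ W r t v.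
have [sh [shc [shK shge]]] : exists sg : R -> R, continuous sg /\ classKinf sg /\
    forall r v, 0 <= r -> Z1 r v -> v <= sg r.
  apply: L1rel.
    move=> e e0; have [d [d0 Hd]] := Wa e0; exists d; split => // r v r0 rd [t [t0 w]].
    exact: (Hd r t v r0 rd t0 w).
  move=> C; have [M HM] := Wa' C; exists M => r v r0 rC [t [t0 w]]; exact: (HM r t v r0 rC t0 w).
have shK' := proj1 shK.
pose c (k : nat) := (2:R) ^+ k * (sh k.+1%:R + 1).
have shk0 (k : nat) : 0 <= sh k.+1%:R by apply: K_ge0 shK' _.
have c_ge1 k : 1 <= c k.
  rewrite /c; apply: mulr_ege1; first by apply: exprn_ege1; lra.
  by have := shk0 k; lra.
have c_pos k : 0 < c k by apply: lt_le_trans (c_ge1 k).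
have c_mono k K : (k <= K)%N -> c k <= c K.
  move=> kK; rewrite /c; apply: ler_pM.
  - exact: exprn_ge0.
  - by have := shk0 k; lra.
  - by apply: ler_weXn2l => //; lra.
  - rewrite lerD2r; apply: K_mono shK' _ _ => //; by rewrite ler_nat.
have key k r t v : 0 <= r -> r <= k.+1%:R -> 0 <= t -> W r t v -> v / c k <= ((2:R) ^+ k)^-1.
  move=> r0 rk t0 w; rewrite ler_pdivrMr // /c mulrA mulVf ?expf_neq0 // mul1r.
  have := shge r v r0 (ex_intro _ t (conj t0 w)).
  have := K_mono shK' r0 rk; lra.
pose Z2 q v := exists k r t v', [/\ 0 <= t, q = (t + 1)^-1, 0 <= r & r <= k.+1%:R]
  /\ W r t v' /\ v = v' / c k.
have [lh [lhc [lhK lhge]]] : exists sg : R -> R, continuous sg /\ classKinf sg /\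
    forall r v, 0 <= r -> Z2 r v -> v <= sg r.
  apply: L1rel.
    move=> e e0.
    set K := Num.truncn e^-1.
    have hK : ((2:R) ^+ K)^-1 < e.
      have h1 := truncnS_gt e^-1; have h2 := two_pow R K.
      rewrite -[e]invrK ltf_pV2 ?posrE ?invr_gt0 ?exprn_gt0 //; lra.
    have [T HT] := Wb K.+1%:R e0.
    exists (`|T| + 1)^-1; split; first exact: inv1_pos.
    move=> q v q0 qd [k [r [t [v' [[t0 qE r0 rk] [w ->]]]]]].
    have tT : T <= t.
      move: qd; rewrite qE lef_pV2 ?posrE ?ltr_wpDl ?ltr_pwDl // lerD2r => h.
      by apply: le_trans h; exact: ler_norm.
    have [kK|Kk] := ltnP k K.
      have v'e : v' <= e.
        apply: (HT r t v' r0 _ t0 tT w); apply: le_trans rk _; by rewrite ler_nat ltnS ltnW.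
      have [v'0|v'0] := leP v' 0.
        by apply: le_trans (ltW e0); rewrite pmulr_lle0 // invr_gt0.
      apply: le_trans v'e; rewrite ler_pdivrMr //; rewrite -[X in X <= _]mulr1.
      by apply: ler_wpM2l; [exact: ltW|exact: c_ge1].
    apply: le_trans (ltW hK); apply: le_trans (key _ _ _ _ r0 rk t0 w) _.
    by rewrite lef_pV2 ?posrE ?exprn_gt0 //; apply: ler_weXn2l => //; lra.
  move=> C; exists 1 => q v q0 qC [k [r [t [v' [[t0 _ r0 rk] [w ->]]]]]].
  apply: le_trans (key _ _ _ _ r0 rk t0 w) _.
  by rewrite invf_le1 ?exprn_gt0 //; apply: exprn_ege1; lra.
pose Z3 (q v : R) := exists k : nat, k.+1%:R <= q /\ v = c k.
have [rh [rhc [rhK rhge]]] : exists sg : R -> R, continuous sg /\ classKinf sg /\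
    forall r v, 0 <= r -> Z3 r v -> v <= sg r.
  apply: L1rel.
    move=> e e0; exists (1/2); split => // r v r0 rd [k [kr ->]].
    have h1 : (1:R) <= k.+1%:R by rewrite ler1n.
    lra.
  move=> C; exists (c (Num.truncn C)) => q v q0 qC [k [kq ->]].
  apply: c_mono; rewrite truncn_ge_nat; first by move: kq qC; rewrite -natr1; lra.
  by move: kq; rewrite -natr1; have : (0:R) <= k%:R by []; lra.
pose l (t : R) := lh (`|t| + 1)^-1.
pose rho (r : R) := rh (`|r| + 1).
pose beta (r t : R) := Order.min (sh r) (rho r * l t) + r * (`|t| + 1)^-1.
have lhK' := proj1 lhK; have rhK' := proj1 rhK.
have l0 t : 0 <= l t by apply: (K_ge0 lhK' (ltW (inv1_pos t))).
have l_anti a b : 0 <= a -> a <= b -> l b <= l a.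
  by move=> a0 ab; apply: K_mono lhK' _ _; [exact: ltW (inv1_pos b)|exact: inv1_anti].
have rho0 r : 0 <= rho r by apply: K_ge0 rhK' _; rewrite addr_ge0.
have rho_mono a b : 0 <= a -> a <= b -> rho a <= rho b.
  move=> a0 ab; apply: K_mono rhK' _ _; first by rewrite addr_ge0.
  by rewrite lerD2r !ger0_norm //; exact: le_trans ab.
have sh0 r : 0 <= r -> 0 <= sh r by move=> r0; apply: K_ge0 shK' r0.
have lc : continuous l.
  by move=> t; apply: (@continuous_comp _ _ _ _ lh t); [exact: inv1_cont|exact: lhc].
have rhoc : continuous rho.
  move=> r; apply: (@continuous_comp _ _ _ (fun r : R => `|r| + 1) rh r); last exact: rhc.
  by apply: cvgD; [apply: cvg_norm; exact: cvg_id|exact: cvg_cst].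
have minle2 (a b c' d : R) : a <= b -> c' <= d -> Order.min a c' <= Order.min b d.
  move=> ab cd; rewrite le_min !ge_min ab cd orbT /=.
  by case: (leP a c') => //; rewrite orbT.
exists beta; split; last first.
  move=> r t v r0 t0 w.
  have h1 : v <= sh r by apply: shge r0 _; exists t.
  set k := Num.truncn r.
  have rk : r <= k.+1%:R by exact/ltW/truncnS_gt.
  have h2 : v / c k <= l t.
    rewrite /l ger0_norm //; apply: lhge; first by rewrite invr_ge0 addr_ge0.
    by exists k, r, t, v; split.
  have h3 : c k <= rho r.
    apply: rhge; first by rewrite addr_ge0.
    by exists k; split => //; rewrite ger0_norm // -natr1 lerD2r truncn_le.
  have h4 : v <= rho r * l t.
    move: h2; rewrite ler_pdivrMr // => h2; apply: le_trans h2 _.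
    by rewrite mulrC; apply: ler_wpM2r; [exact: l0|exact: h3].
  rewrite /beta; apply: le_trans (_ : Order.min (sh r) (rho r * l t) <= _).
    by rewrite le_min h1 h4.
  by rewrite lerDl mulr_ge0 // ltW // inv1_pos.
split.
  move=> t t0; split.
    apply: continuous_subspaceT => r; rewrite /beta; apply: cvgD.
      apply: (@continuous_min R R sh (fun r => rho r * l t) r); first exact: shc.
      by apply: cvgM; [exact: rhoc|exact: cvg_cst].
    by apply: cvgM; [exact: cvg_id|exact: cvg_cst].
  split.
    move=> r r0; rewrite /beta addr_ge0 ?mulr_ge0 ?(ltW (inv1_pos t)) //.
    by rewrite le_min sh0 // mulr_ge0.
  split.
    move=> a b a0 ab; rewrite /beta; apply: ler_ltD.
      by apply: minle2; [apply: K_mono shK' _ _ => //; exact: ltW|apply: ler_wpM2r => //; apply: rho_mono => //; exact: ltW].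
    by rewrite ltr_pM2r // inv1_pos.
  rewrite /beta mul0r addr0; have [_ [_ [_ ->]]] := shK'.
  by rewrite min_l // mulr_ge0.
move=> r r0; split.
  apply: continuous_subspaceT => t; rewrite /beta; apply: cvgD.
    apply: (@continuous_min R R (fun=> sh r) (fun t => rho r * l t) t); first exact: cvg_cst.
    by apply: cvgM; [exact: cvg_cst|exact: lc].
  by apply: cvgM; [exact: cvg_cst|exact: inv1_cont].
split.
  move=> t t0; rewrite /beta addr_ge0 ?mulr_ge0 ?(ltW (inv1_pos t)) ?(ltW r0) //.
  by rewrite le_min sh0 ?(ltW r0) // mulr_ge0.
split.
  move=> a b a0 ab; rewrite /beta; apply: ler_ltD.
    by apply: minle2 => //; apply: ler_wpM2l => //; apply: l_anti => //; exact: ltW.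
  rewrite ltr_pM2l // ltf_pV2 ?posrE ?(ltr_wpDl (normr_ge0 _) ltr01) // ltrD2r !ger0_norm //.
  exact: le_trans (ltW ab).
apply: eps_pinfty => e e0.
have e'0 : 0 < e / (2 * (rho r + 1)).
  by rewrite divr_gt0 // mulr_gt0 // ltr_wpDl.
have [d [d0 Hd]] := K_eps lhK' e'0.
exists (d^-1 + 2 * r / e) => t tT.
have hd : 0 <= d^-1 by rewrite invr_ge0 ltW.
have hre : 0 <= 2 * r / e by rewrite divr_ge0 ?mulr_ge0 ?ltW.
have t0 : 0 <= t by lra.
have beta0 : 0 <= beta r t.
  rewrite /beta addr_ge0 ?mulr_ge0 ?(ltW (inv1_pos t)) ?(ltW r0) //.
  by rewrite le_min sh0 ?(ltW r0) // mulr_ge0.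
rewrite ger0_norm //.
have hl : l t <= e / (2 * (rho r + 1)).
  apply: Hd; first exact: ltW (inv1_pos t).
  rewrite ger0_norm // -[d]invrK lef_pV2 ?posrE ?invr_gt0 ?ltr_wpDl //.
  lra.
have h1 : rho r * l t <= e / 2.
  apply: le_trans (ler_wpM2l (rho0 r) hl) _.
  rewrite mulrA ler_pdivrMr ?mulr_gt0 ?ltr_wpDl // mulrAC.
  have := rho0 r; nra.
have h2 : r * (`|t| + 1)^-1 <= e / 2.
  rewrite ger0_norm // -[r * _]/(r / (t + 1)) ler_pdivrMr ?ltr_wpDl //.
  have : 2 * r / e <= t by lra.
  rewrite ler_pdivrMr // => h; lra.
rewrite /beta; apply: le_trans (_ : rho r * l t + r * (`|t| + 1)^-1 <= _); last by lra.
by rewrite lerD2r ge_min lexx orbT.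
Qed.
End L2.


Lemma ge_min_l (R : realType) (a b : R) : Order.min a b <= a.
Proof. by rewrite ge_min lexx. Qed.
Lemma ge_min_r (R : realType) (a b : R) : Order.min a b <= b.
Proof. by rewrite ge_min lexx orbT. Qed.

Section Sys.
Variables (R : realType) (I : timedom) (X : normedModType R) (U : lmodType R)
  (Y : normedModType R) (S : ControlSystem R I X U Y).
Local Notation y := (yout S).
Local Notation tv := (@proj1_sig R (inI I)).

Lemma Un0 u : Uin S u -> 0 <= Unorm S u.
Proof. exact: Unorm_ge0. Qed.

Lemma OUGS_of :
  (forall e, 0 < e -> exists d, 0 < d /\ forall x u t, Uin S u -> `|x| <= d ->
     Unorm S u <= d -> `|y t x u| <= e) ->
  (forall C, exists M, forall x u t, Uin S u -> `|x| <= C -> Unorm S u <= C ->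
     `|y t x u| <= M) -> OUGS S.
Proof.
move=> H0 HB.
pose Z (r v : R) := exists x u t, [/\ Uin S u, `|x| <= r, Unorm S u <= r & v = `|y t x u|].
have [sg [_ [sK sge]]] : exists sg : R -> R, continuous sg /\ classKinf sg /\
    forall r v, 0 <= r -> Z r v -> v <= sg r.
  apply: L1rel.
    move=> e e0; have [d [d0 Hd]] := H0 e e0; exists d; split => // r v r0 rd [x [u [t [hu hx hn ->]]]].
    by apply: Hd => //; apply: le_trans rd.
  move=> C; have [M HM] := HB C; exists M => r v r0 rC [x [u [t [hu hx hn ->]]]].
  by apply: HM => //; apply: le_trans rC.
exists sg, sg; split => //; split => // x u t hu.
have n0 := Un0 hu.
have sK' := proj1 sK.
have hx0 := K_ge0 sK' (normr_ge0 x); have hu0 := K_ge0 sK' n0.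
have [h|h] := leP `|x| (Unorm S u).
  have := sge (Unorm S u) `|y t x u| n0 (ex_intro _ x (ex_intro _ u (ex_intro _ t (And4 hu h (lexx _) erefl)))).
  lra.
have := sge `|x| `|y t x u| (normr_ge0 x) (ex_intro _ x (ex_intro _ u (ex_intro _ t (And4 hu (lexx _) (ltW h) erefl)))).
lra.
Qed.

Lemma IOS_OUGS : IOS S -> OUGS S.
Proof.
move=> [b [g [hb [hg H]]]]; apply: OUGS_of.
  move=> e e0; have e2 : 0 < e / 2 by lra.
  have [d1 [d10 H1]] := K_eps (KL_K hb (lexx 0)) e2.
  have [d2 [d20 H2]] := K_eps (proj1 hg) e2.
  exists (Num.min d1 d2); split; first by rewrite lt_min d10.
  move=> x u t hu hx hn; apply: le_trans (H x u t hu) _.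
  have := KL_0 hb (normr_ge0 x) (time_ge0 t).
  have := H1 `|x| (normr_ge0 x) (le_trans hx (ge_min_l _ _)).
  have := H2 _ (Un0 hu) (le_trans hn (ge_min_r _ _)).
  lra.
move=> C; exists (b `|C| 0 + g `|C|) => x u t hu hx hn.
apply: le_trans (H x u t hu) _.
have := KL_0 hb (normr_ge0 x) (time_ge0 t).
have := KL_mono hb (lexx 0) (normr_ge0 x) (le_trans hx (ler_norm C)).
have := K_mono (proj1 hg) (Un0 hu) (le_trans hn (ler_norm C)).
lra.
Qed.

Lemma OUGS_OULS : OUGS S -> OULS S.
Proof. by move=> [s [g [hs [hg H]]]]; exists 1, s, g; split => //; split => //; split => // x u t hu _ _; apply: H. Qed.

Lemma IOS_OCAG : IOS S -> OCAG S.
Proof. by move=> [b [g [hb [hg H]]]]; exists b, g, 0; split => //; split => //; split => // x u t hu; rewrite addr0; apply: H. Qed.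

Lemma IOS_OUAG : IOS S -> OUAG S.
Proof.
move=> [b [g [hb [hg H]]]]; exists g; split => // e r s e0 r0 s0.
have [T HT] := KL_eps hb r0 e0.
have [tau hT] := time_ge I T.
exists tau => x u t hu hx hn ht; apply: le_trans (H x u t hu) _; rewrite lerD2r.
apply: le_trans (KL_mono hb (time_ge0 t) (normr_ge0 x) (ltW hx)) _.
apply: HT; exact: le_trans ht.
Qed.

Lemma IOS_OCEP : IOS S -> OCEP S.
Proof.
move=> [b [g [hb [hg H]]]] tau e e0; have e2 : 0 < e / 2 by lra.
have [d1 [d10 H1]] := K_eps (KL_K hb (lexx 0)) e2.
have [d2 [d20 H2]] := K_eps (proj1 hg) e2.
exists (Num.min d1 d2); split; first by rewrite lt_min d10.
move=> x u t hu _ hx hn; apply: le_trans (H x u t hu) _.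
have := KL_0 hb (normr_ge0 x) (time_ge0 t).
have := H1 `|x| (normr_ge0 x) (le_trans hx (ge_min_l _ _)).
have := H2 _ (Un0 hu) (le_trans hn (ge_min_r _ _)).
lra.
Qed.

Lemma IOS_BORS : IOS S -> BORS S.
Proof.
move=> [b [g [hb [hg H]]]] C tau C0; exists (b C 0 + g C) => x u t hu hx hn _.
apply: le_trans (H x u t hu) _.
have := KL_0 hb (normr_ge0 x) (time_ge0 t).
have := KL_mono hb (lexx 0) (normr_ge0 x) (ltW hx).
have := K_mono (proj1 hg) (Un0 hu) (ltW hn).
lra.
Qed.

Lemma OULS_OCEP : OULS S -> OCEP S.
Proof.
move=> [r0 [s [g [r00 [hs [hg H]]]]]] tau e e0; have e2 : 0 < e / 2 by lra.
have [d1 [d10 H1]] := K_eps (proj1 hs) e2.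
have [d2 [d20 H2]] := K_eps (proj1 hg) e2.
exists (Num.min (Num.min d1 d2) (r0 / 2)); split.
  by rewrite !lt_min d10 d20 /=; lra.
move=> x u t hu _ hx hn.
have hm1 := ge_min_l (Num.min d1 d2) (r0 / 2); have hm2 := ge_min_r (Num.min d1 d2) (r0 / 2).
have hm3 := ge_min_l d1 d2; have hm4 := ge_min_r d1 d2.
apply: le_trans (H x u t hu _ _) _; try lra.
have := H1 `|x| (normr_ge0 x) ltac:(lra).
have := H2 _ (Un0 hu) ltac:(lra).
lra.
Qed.


Lemma C_OUGS : OUAG S -> OCEP S -> BORS S -> OUGS S.
Proof.
move=> [gA [hgA HA]] HC HB; apply: OUGS_of.
  move=> e e0; have e2 : 0 < e / 2 by lra.
  have [tau Htau] := HA (e / 2) 1 1 e2 ltr01 ltr01.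
  have [d1 [d10 H1]] := HC tau (e / 2) e2.
  have [d2 [d20 H2]] := K_eps (proj1 hgA) e2.
  exists (Num.min (Num.min d1 d2) (1 / 2)); split.
    by rewrite !lt_min d10 d20 /=; lra.
  move=> x u t hu hx hn.
  have hm1 := ge_min_l (Num.min d1 d2) (1 / 2); have hm2 := ge_min_r (Num.min d1 d2) (1 / 2).
  have hm3 := ge_min_l d1 d2; have hm4 := ge_min_r d1 d2.
  have [ht|ht] := leP (tv t) (tv tau).
    have := H1 x u t hu ht ltac:(lra) ltac:(lra); lra.
  have := Htau x u t hu ltac:(lra) ltac:(lra) (ltW ht).
  have := H2 _ (Un0 hu) ltac:(lra); lra.
move=> C; set C' := `|C| + 1.
have C'0 : 0 < C' by rewrite /C' ltr_wpDl.
have hC : C < C' by have := ler_norm C; rewrite /C'; lra.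
have [tau Htau] := HA 1 C' C' ltr01 C'0 C'0.
have [M HM] := HB C' tau C'0.
exists (Num.max M (1 + gA C')) => x u t hu hx hn.
have [ht|ht] := ltP (tv t) (tv tau).
  by apply: le_trans (HM x u t hu ltac:(lra) ltac:(lra) ht) _; rewrite le_max lexx.
apply: le_trans (Htau x u t hu ltac:(lra) ltac:(lra) ht) _.
rewrite le_max; apply/orP; right; rewrite lerD2l.
by apply: K_mono (proj1 hgA) (Un0 hu) _; lra.
Qed.

Lemma OCAG_OUAG : OCAG S -> OUAG S.
Proof.
move=> [b [g [c [hb [hg [c0 H]]]]]]; exists g; split => // e r s e0 r0 s0.
have rc : 0 < r + c by lra.
have [T HT] := KL_eps hb rc e0.
have [tau hT] := time_ge I T.
exists tau => x u t hu hx hn ht; apply: le_trans (H x u t hu) _; rewrite lerD2r.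
apply: le_trans (KL_mono hb (time_ge0 t) _ (_ : `|x| + c <= r + c)) _.
- by rewrite addr_ge0.
- by rewrite lerD2r ltW.
apply: HT; exact: le_trans ht.
Qed.

Lemma D_OUGS : OCAG S -> OULS S -> OUGS S.
Proof.
move=> [b [g [c [hb [hg [c0 H]]]]]] [r0 [s [g' [r00 [hs [hg' H']]]]]].
apply: OUGS_of.
  move=> e e0; have e2 : 0 < e / 2 by lra.
  have [d1 [d10 H1]] := K_eps (proj1 hs) e2.
  have [d2 [d20 H2]] := K_eps (proj1 hg') e2.
  exists (Num.min (Num.min d1 d2) (r0 / 2)); split.
    by rewrite !lt_min d10 d20 /=; lra.
  move=> x u t hu hx hn.
  have hm1 := ge_min_l (Num.min d1 d2) (r0 / 2); have hm2 := ge_min_r (Num.min d1 d2) (r0 / 2).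
  have hm3 := ge_min_l d1 d2; have hm4 := ge_min_r d1 d2.
  apply: le_trans (H' x u t hu _ _) _; try lra.
  have := H1 `|x| (normr_ge0 x) ltac:(lra).
  have := H2 _ (Un0 hu) ltac:(lra).
  lra.
move=> C; exists (b (`|C| + c) 0 + g `|C|) => x u t hu hx hn.
apply: le_trans (H x u t hu) _.
have hxc : 0 <= `|x| + c by rewrite addr_ge0.
have := KL_0 hb hxc (time_ge0 t).
have := KL_mono hb (lexx 0) hxc (_ : `|x| + c <= `|C| + c).
have := K_mono (proj1 hg) (Un0 hu) (le_trans hn (ler_norm C)).
move=> h1 h2 h3; have := h2 ltac:(have := ler_norm C; lra); lra.
Qed.

Lemma E_IOS : OUAG S -> OUGS S -> IOS S.
Proof.
move=> [gA [hgA HA]] [s [g [hs [hg H]]]].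
have hsK := proj1 hs; have hgK := proj1 hg; have hgAK := proj1 hgA.
pose W (r t v : R) := exists x u (t' : time R I), [/\ Uin S u, `|x| <= r, Unorm S u <= r & tv t' = t]
  /\ v = `|y t' x u| - gA (Unorm S u).
have [b [hb Hb]] : exists beta : R -> R -> R, classKL beta /\
    forall r t v, 0 <= r -> 0 <= t -> W r t v -> v <= beta r t.
  apply: L2.
  - move=> e e0; have e2 : 0 < e / 2 by lra.
    have [d1 [d10 H1]] := K_eps hsK e2.
    have [d2 [d20 H2]] := K_eps hgK e2.
    exists (Num.min d1 d2); split; first by rewrite lt_min d10.
    move=> r t v r0 rd t0 [x [u [t' [[hu hx hn _] ->]]]].
    have hm3 := ge_min_l d1 d2; have hm4 := ge_min_r d1 d2.
    have := H x u t' hu.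
    have := H1 `|x| (normr_ge0 x) ltac:(lra).
    have := H2 _ (Un0 hu) ltac:(lra).
    have := K_ge0 hgAK (Un0 hu).
    lra.
  - move=> C; exists (s `|C| + g `|C|) => r t v r0 rC t0 [x [u [t' [[hu hx hn _] ->]]]].
    have := H x u t' hu.
    have := K_mono hsK (normr_ge0 x) (_ : `|x| <= `|C|).
    have := K_mono hgK (Un0 hu) (_ : Unorm S u <= `|C|).
    have := K_ge0 hgAK (Un0 hu).
    have := ler_norm C.
    move=> h1 h2 h3 h4 h5; have := h3 ltac:(lra); have := h4 ltac:(lra); lra.
  - move=> r e e0; set r' := `|r| + 1.
    have r'0 : 0 < r' by rewrite /r' ltr_wpDl.
    have hr : r < r' by have := ler_norm r; rewrite /r'; lra.
    have [tau Htau] := HA e r' r' e0 r'0 r'0.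
    exists (tv tau) => r1 t v r10 r1r t0 tT [x [u [t' [[hu hx hn ht'] ->]]]].
    rewrite -ht' in tT; have := Htau x u t' hu ltac:(lra) ltac:(lra) tT; lra.
pose Z (r v : R) := 0 <= r /\ v = s r + g r + gA r.
have [G [_ [hG HG]]] : exists sg : R -> R, continuous sg /\ classKinf sg /\
    forall r v, 0 <= r -> Z r v -> v <= sg r.
  apply: L1rel.
    move=> e e0; have e3 : 0 < e / 3 by lra.
    have [d1 [d10 H1]] := K_eps hsK e3.
    have [d2 [d20 H2]] := K_eps hgK e3.
    have [d3 [d30 H3]] := K_eps hgAK e3.
    exists (Num.min (Num.min d1 d2) d3); split.
      by rewrite !lt_min d10 d20 d30.
    move=> r v r0 rd [_ ->].
    have hm1 := ge_min_l (Num.min d1 d2) d3; have hm2 := ge_min_r (Num.min d1 d2) d3.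
    have hm3 := ge_min_l d1 d2; have hm4 := ge_min_r d1 d2.
    have := H1 r r0 ltac:(lra); have := H2 r r0 ltac:(lra); have := H3 r r0 ltac:(lra).
    lra.
  move=> C; exists (s `|C| + g `|C| + gA `|C|) => r v r0 rC [_ ->].
  have rC' : r <= `|C| by apply: le_trans rC (ler_norm C).
  have := K_mono hsK r0 rC'; have := K_mono hgK r0 rC'; have := K_mono hgAK r0 rC'.
  lra.
exists b, G; split => //; split => // x u t hu.
have n0 := Un0 hu; have t0 := time_ge0 t.
have hGu := HG (Unorm S u) _ n0 (conj n0 erefl).
have hs0 := K_ge0 hsK n0; have hg0 := K_ge0 hgK n0; have hgA0 := K_ge0 hgAK n0.
have hb0 := K_ge0 (KL_K hb t0) (normr_ge0 x).
have [h|h] := leP `|x| (Unorm S u).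
  have := H x u t hu.
  have := K_mono hsK (normr_ge0 x) h.
  lra.
have := Hb `|x| (tv t) (`|y t x u| - gA (Unorm S u)) (normr_ge0 x) t0.
move=> /(_ (ex_intro _ x (ex_intro _ u (ex_intro _ t (conj (And4 hu (lexx _) (ltW h) erefl) erefl))))).
lra.
Qed.

End Sys.

Theorem theorem1 (R : realType) (I : timedom) (X : normedModType R)
    (U : lmodType R) (Y : normedModType R) (S : ControlSystem R I X U Y) :
  (IOS S <-> OUAG S /\ OCEP S /\ BORS S) /\
  (IOS S <-> OUAG S /\ OULS S /\ BORS S) /\
  (IOS S <-> OUAG S /\ OUGS S) /\
  (IOS S <-> OCAG S /\ OULS S).
Proof.
split; [|split; [|split]].
- split; first by move=> h; split; [exact: IOS_OUAG|split; [exact: IOS_OCEP|exact: IOS_BORS]].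
  by move=> [h1 [h2 h3]]; apply: E_IOS => //; exact: C_OUGS.
- split; first by move=> h; split; [exact: IOS_OUAG|split; [exact/OUGS_OULS/IOS_OUGS|exact: IOS_BORS]].
  by move=> [h1 [h2 h3]]; apply: E_IOS => //; apply: C_OUGS => //; exact: OULS_OCEP.
- split; first by move=> h; split; [exact: IOS_OUAG|exact: IOS_OUGS].
  by move=> [h1 h2]; apply: E_IOS.
- split; first by move=> h; split; [exact: IOS_OCAG|exact/OUGS_OULS/IOS_OUGS].
  by move=> [h1 h2]; apply: E_IOS; [exact: OCAG_OUAG|exact: D_OUGS].
Qed.
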